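(* Let $G$ be a Polish group. Then every Haar meager subset of $G$ is meager in $G$.
   Context: Let $G$ be a Polish group (not necessarily abelian). A set $A\subseteq G$ is called Haar meager if there exist a Borel set $B\subseteq G$ with $A\subseteq B$, a compact metric space $K$, and a continuous map $f\colon K\to G$ such that $f^{-1}(gBh)$ is meager in $K$ for every $g,h\in G$. *)

(* Defs.v *)
From Stdlib Require Import Reals List.
Open Scope R_scope.

Record MetricSpace := {
  carrier :> Type;
  dist : carrier -> carrier -> R;
  dist_nonneg : forall x y, 0 <= dist x y;
  dist_eq0 : forall x y, dist x y = 0 <-> x = y;
  dist_sym : forall x y, dist x y = dist y x;
  dist_tri : forall x y z, dist x z <= dist x y + dist y z
}.

Section Topology.
Variable M : MetricSpace.

Definition open_set (U : M -> Prop) : Prop :=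
  forall x, U x -> exists eps, 0 < eps /\ forall y, dist M x y < eps -> U y.

Definition closure (A : M -> Prop) : M -> Prop :=
  fun x => forall eps, 0 < eps -> exists y, A y /\ dist M x y < eps.

Definition interior (A : M -> Prop) : M -> Prop :=
  fun x => exists eps, 0 < eps /\ forall y, dist M x y < eps -> A y.

Definition nowhere_dense (A : M -> Prop) : Prop :=
  forall x, ~ interior (closure A) x.

Definition meager (A : M -> Prop) : Prop :=
  exists N : nat -> M -> Prop,
    (forall n, nowhere_dense (N n)) /\ (forall x, A x -> exists n, N n x).

Inductive borel : (M -> Prop) -> Prop :=
| borel_open : forall U, open_set U -> borel U
| borel_compl : forall A, borel A -> borel (fun x => ~ A x)
| borel_union : forall F : nat -> M -> Prop,
    (forall n, borel (F n)) -> borel (fun x => exists n, F n x)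
| borel_ext : forall A B, borel A -> (forall x, A x <-> B x) -> borel B.

Definition cauchy (u : nat -> M) : Prop :=
  forall eps, 0 < eps -> exists N, forall m n, (N <= m)%nat -> (N <= n)%nat ->
    dist M (u m) (u n) < eps.

Definition converges_to (u : nat -> M) (l : M) : Prop :=
  forall eps, 0 < eps -> exists N, forall n, (N <= n)%nat -> dist M (u n) l < eps.

Definition complete : Prop :=
  forall u, cauchy u -> exists l, converges_to u l.

Definition separable : Prop :=
  exists s : nat -> M, forall x eps, 0 < eps -> exists n, dist M x (s n) < eps.

Definition compact : Prop :=
  forall (I : Type) (U : I -> M -> Prop),
    (forall i, open_set (U i)) -> (forall x, exists i, U i x) ->
    exists l : list I, forall x, exists i, In i l /\ U i x.
End Topology.

Definition continuous (M N : MetricSpace) (f : M -> N) : Prop :=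
  forall x eps, 0 < eps -> exists delta, 0 < delta /\
    forall y, dist M x y < delta -> dist N (f x) (f y) < eps.

Record PolishGroup := {
  pg_space :> MetricSpace;
  pg_mul : pg_space -> pg_space -> pg_space;
  pg_inv : pg_space -> pg_space;
  pg_one : pg_space;
  pg_assoc : forall x y z, pg_mul x (pg_mul y z) = pg_mul (pg_mul x y) z;
  pg_mul1 : forall x, pg_mul pg_one x = x;
  pg_mulV : forall x, pg_mul (pg_inv x) x = pg_one;
  pg_complete : complete pg_space;
  pg_separable : separable pg_space;
  pg_mul_cont : forall x y eps, 0 < eps -> exists delta, 0 < delta /\
    forall x' y', dist pg_space x x' < delta -> dist pg_space y y' < delta ->
      dist pg_space (pg_mul x y) (pg_mul x' y') < eps;
  pg_inv_cont : continuous pg_space pg_space pg_inv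
}.

Record CompactMetricSpace := {
  cms_space :> MetricSpace;
  cms_compact : compact cms_space;
  cms_nonempty : inhabited cms_space
}.

Definition haar_meager (G : PolishGroup) (A : G -> Prop) : Prop :=
  exists B : G -> Prop, borel G B /\ (forall x, A x -> B x) /\
  exists (K : CompactMetricSpace) (f : K -> G),
    continuous K G f /\
    forall g h : G,
      meager K (fun k => exists b, B b /\ f k = pg_mul G (pg_mul G g b) h).

(* Main.v *)
Require Import Defs.
From Stdlib Require Import Reals List.
From Stdlib Require Import Lra Lia Classical ClassicalEpsilon Cantor.
Require Import Defs.
Open Scope R_scope.

Lemma my_choice {A B : Type} (P : A -> B -> Prop) :
  (forall a, exists b, P a b) -> exists f : A -> B, forall a, P a (f a).
Proof.
  intros H. exists (fun a => proj1_sig (constructive_indefinite_description _ (H a))).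
  intro a. exact (proj2_sig (constructive_indefinite_description _ (H a))).
Qed.

Section Gen.
Variable M : MetricSpace.

Lemma dist_refl (x : M) : dist M x x = 0.
Proof. apply dist_eq0. reflexivity. Qed.

Lemma meager_sub (S T : M -> Prop) : meager M T -> (forall x, S x -> T x) -> meager M S.
Proof.
  intros [N [H1 H2]] H. exists N. split; auto.
Qed.

Lemma nd_meager (S : M -> Prop) : nowhere_dense M S -> meager M S.
Proof.
  intros H. exists (fun _ => S). split; auto. intros x Hx; exists 0%nat; auto.
Qed.

Lemma meager_countable (S : nat -> M -> Prop) :
  (forall n, meager M (S n)) -> meager M (fun x => exists n, S n x).
Proof.
  intros H. destruct (my_choice _ H) as [F HF].
  exists (fun p => F (fst (of_nat p)) (snd (of_nat p))). split.
  - intro p. apply (HF (fst (of_nat p))).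
  - intros x [n Hn]. destruct (proj2 (HF n) x Hn) as [m Hm].
    exists (to_nat (n, m)). rewrite cancel_of_to. simpl. exact Hm.
Qed.

Lemma meager_union2 (S T : M -> Prop) :
  meager M S -> meager M T -> meager M (fun x => S x \/ T x).
Proof.
  intros HS HT.
  apply meager_sub with (T := fun x => exists n, (match n with O => S | _ => T end) x).
  - apply meager_countable. intros [|n]; auto.
  - intros x [H|H]; [exists O | exists 1%nat]; exact H.
Qed.

Lemma meager_empty : meager M (fun _ => False).
Proof.
  apply nd_meager. intros x [e [He H]]. destruct (H x ltac:(rewrite dist_refl; lra) e He) as [y [[] _]].
Qed.

Lemma closure_incl (S : M -> Prop) x : S x -> closure M S x.
Proof. intros H e He. exists x. split; auto. rewrite dist_refl; lra. Qed.

Lemma closure_closure (S : M -> Prop) x : closure M (closure M S) x -> closure M S x.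
Proof.
  intros H e He. destruct (H (e/2)) as [y [Hy Hd]]; [lra|].
  destruct (Hy (e/2)) as [z [Hz Hd']]; [lra|].
  exists z. split; auto. pose proof (dist_tri M x y z). lra.
Qed.

Lemma nd_closure (S : M -> Prop) : nowhere_dense M S -> nowhere_dense M (closure M S).
Proof.
  intros H x [e [He Hb]]. apply (H x). exists e. split; auto.
  intros y Hy. apply closure_closure. auto.
Qed.

Lemma nd_sub (S T : M -> Prop) : nowhere_dense M T -> (forall x, S x -> T x) -> nowhere_dense M S.
Proof.
  intros H Hs x [e [He Hb]]. apply (H x). exists e. split; auto.
  intros y Hy e' He'. destruct (Hb y Hy e' He') as [z [Hz Hd]]. eauto.
Qed.

Lemma nd_boundary (U : M -> Prop) : open_set M U ->
  nowhere_dense M (fun x => closure M U x /\ ~ U x).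
Proof.
  intros HU x [e [He Hb]].
  assert (Hx : closure M U x).
  { apply closure_closure. intros e' He'. destruct (Hb x ltac:(rewrite dist_refl; lra) e' He') as [z [[Hz _] Hd]].
    eauto. }
  destruct (Hx e He) as [y [Uy Hxy]].
  destruct (HU y Uy) as [e1 [He1 Hb1]].
  set (e2 := Rmin e1 (e - dist M x y)).
  assert (He2 : 0 < e2). { unfold e2. apply Rmin_pos; lra. }
  destruct (Hb y Hxy e2 He2) as [z [[_ Hz] Hd]].
  apply Hz. apply Hb1. pose proof (Rmin_l e1 (e - dist M x y)). fold e2 in H. lra.
Qed.

Lemma closure_compl_open (U : M -> Prop) : open_set M (fun x => ~ closure M U x).
Proof.
  intros x Hx. apply not_all_ex_not in Hx. destruct Hx as [e He].
  apply imply_to_and in He. destruct He as [He Hn].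
  exists (e/2). split; [lra|]. intros z Hz Hcz. apply Hn.
  destruct (Hcz (e/2)) as [y [Uy Hd]]; [lra|]. exists y. split; auto.
  pose proof (dist_tri M x z y). lra.
Qed.

Definition BP (B : M -> Prop) : Prop :=
  exists U, open_set M U /\ meager M (fun x => B x /\ ~ U x) /\ meager M (fun x => U x /\ ~ B x).

Lemma borel_BP (B : M -> Prop) : borel M B -> BP B.
Proof.
  induction 1.
  - exists U. split; auto. split; apply meager_sub with (T := fun _ => False);
    try apply meager_empty; tauto.
  - destruct IHborel as [U [HU [H1 H2]]].
    exists (fun x => ~ closure M U x). split; [apply closure_compl_open|]. split.
    + apply meager_sub with (T := fun x => (U x /\ ~ A x) \/ (closure M U x /\ ~ U x)).
      * apply meager_union2; auto. apply nd_meager. apply nd_boundary; auto.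
      * intros x [Hn Hc]. apply NNPP in Hc. destruct (classic (U x)); tauto.
    + apply meager_sub with (T := fun x => A x /\ ~ U x); auto.
      intros x [Hc HA]. apply NNPP in HA. split; auto. intro. apply Hc. apply closure_incl; auto.
  - destruct (my_choice (fun n U => open_set M U /\ meager M (fun x => F n x /\ ~ U x) /\ meager M (fun x => U x /\ ~ F n x)) H0) as [U HU].
    exists (fun x => exists n, U n x). split; [|split].
    + intros x [n Hn]. destruct (proj1 (HU n) x Hn) as [e [He Hb]]. exists e. split; auto.
      intros y Hy. exists n. auto.
    + apply meager_sub with (T := fun x => exists n, F n x /\ ~ U n x).
      * apply meager_countable. intro n. apply (HU n).
      * intros x [[n Hn] Hu]. exists n. split; auto. intro. apply Hu. eauto.
    + apply meager_sub with (T := fun x => exists n, U n x /\ ~ F n x).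
      * apply meager_countable. intro n. apply (HU n).
      * intros x [[n Hn] Hu]. exists n. split; auto. intro. apply Hu. eauto.
  - destruct IHborel as [U [HU [H1 H2]]]. exists U. split; auto. split.
    + apply meager_sub with (1 := H1). intros x [Hb Hu]. split; auto. apply H0; auto.
    + apply meager_sub with (1 := H2). intros x [Hb Hu]. split; auto. rewrite H0; auto.
Qed.
End Gen.

Section Baire.
Variable M : MetricSpace.

Lemma baire_step (N : M -> Prop) : nowhere_dense M N ->
  forall p : M * R, exists q : M * R, 0 < snd p ->
    0 < snd q /\ snd q <= snd p / 2 /\ dist M (fst p) (fst q) <= (snd p - snd q) / 2 /\
    forall z, dist M (fst q) z < snd q -> ~ N z.
Proof.
  intros HN [x r]. destruct (Rlt_dec 0 r) as [Hr|Hr]; [|exists (x, r); intro H0; simpl in H0; lra].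
  assert (H := HN x). simpl.
  assert (exists y, dist M x y < r/4 /\ ~ closure M N y).
  { apply NNPP. intro Hn. apply H. exists (r/4). split; [lra|]. intros y Hy.
    apply NNPP. intro. apply Hn. eauto. }
  destruct H0 as [y [Hy Hny]].
  apply not_all_ex_not in Hny. destruct Hny as [e He].
  apply imply_to_and in He. destruct He as [He Hn2].
  exists (y, Rmin e (r/4)). intros _. simpl.
  pose proof (Rmin_l e (r/4)). pose proof (Rmin_r e (r/4)).
  assert (0 < Rmin e (r/4)) by (apply Rmin_pos; lra).
  split; [lra|]. split; [lra|]. split; [lra|].
  intros z Hz HNz. apply Hn2. exists z. split; auto. lra.
Qed.

Lemma baire (Hc : complete M) (V : M -> Prop) (HV : open_set M V) (x0 : M) (Hx0 : V x0)
  (N : nat -> M -> Prop) (HN : forall n, nowhere_dense M (N n)) :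
  exists x, V x /\ forall n, ~ N n x.
Proof.
  destruct (HV x0 Hx0) as [r0 [Hr0 Hb0]].
  destruct (my_choice _ (fun np : nat * (M * R) => baire_step (N (fst np)) (HN (fst np)) (snd np))) as [F0 HF0].
  set (F := fun n p => F0 (n, p)).
  assert (HF : forall n p, 0 < snd p -> 0 < snd (F n p) /\ snd (F n p) <= snd p / 2 /\ dist M (fst p) (fst (F n p)) <= (snd p - snd (F n p)) / 2 /\ forall z, dist M (fst (F n p)) z < snd (F n p) -> ~ N n z) by (intros n p; exact (HF0 (n, p))).
  set (sq := fix sq n := match n with O => (x0, r0) | S n => F n (sq n) end).
  assert (Hpos : forall n, 0 < snd (sq n)).
  { induction n; simpl; auto. apply (HF n (sq n) IHn). }
  assert (HS : forall n, snd (sq (S n)) <= snd (sq n) / 2 /\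
     dist M (fst (sq n)) (fst (sq (S n))) <= (snd (sq n) - snd (sq (S n))) / 2 /\
    forall z, dist M (fst (sq (S n))) z < snd (sq (S n)) -> ~ N n z).
  { intro n. simpl. apply (HF n (sq n) (Hpos n)). }
  assert (Hinv : forall k n, dist M (fst (sq n)) (fst (sq (n + k)%nat)) <= (snd (sq n) - snd (sq (n+k)%nat)) / 2).
  { induction k; intro n.
    - rewrite Nat.add_0_r, dist_refl. lra.
    - replace (n + S k)%nat with (S (n + k)) by lia.
      pose proof (dist_tri M (fst (sq n)) (fst (sq (n+k)%nat)) (fst (sq (S (n+k))))).
      pose proof (IHk n). destruct (HS (n+k)%nat) as [_ [H2 _]]. lra. }
  assert (Hdec : forall n, snd (sq n) * (INR n + 1) <= r0).
  { induction n. simpl; lra. destruct (HS n) as [H1 _].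
    rewrite S_INR. pose proof (pos_INR n). pose proof (Hpos (S n)).
    pose proof (Hpos n). nra. }
  assert (Hle : forall n m, (n <= m)%nat -> dist M (fst (sq n)) (fst (sq m)) <= snd (sq n) / 2).
  { intros n m Hnm. replace m with (n + (m - n))%nat by lia. pose proof (Hinv (m-n)%nat n).
    pose proof (Hpos (n + (m-n))%nat). lra. }
  assert (Hcau : cauchy M (fun n => fst (sq n))).
  { intros eps He. destruct (archimed (r0 / eps)) as [Ha _].
    assert (Hz : (0 <= up (r0/eps))%Z).
    { apply le_IZR. assert (0 < r0/eps) by (apply Rdiv_lt_0_compat; lra). simpl; lra. }
    exists (Z.to_nat (up (r0 / eps))). intros m n Hm Hn.
    set (K := Z.to_nat (up (r0 / eps))) in *.
    assert (HK : r0 / eps < INR K + 1).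
    { unfold K. rewrite INR_IZR_INZ, Znat.Z2Nat.id by exact Hz; lra. }
    assert (snd (sq K) < eps).
    { pose proof (Hdec K). pose proof (Hpos K). pose proof (pos_INR K).
      apply Rmult_lt_reg_r with (INR K + 1); [lra|].
      apply Rle_lt_trans with r0; auto.
      apply (Rmult_lt_compat_r eps) in HK; [|lra].
      unfold Rdiv in HK. rewrite Rmult_assoc, Rinv_l, Rmult_1_r in HK; lra. }
    pose proof (Hle K m Hm). pose proof (Hle K n Hn).
    pose proof (dist_tri M (fst (sq m)) (fst (sq K)) (fst (sq n))).
    rewrite (dist_sym M (fst (sq m)) (fst (sq K))) in H2. lra. }
  destruct (Hc _ Hcau) as [l Hl].
  assert (Hin : forall n, dist M (fst (sq n)) l < snd (sq n)).
  { intro n. destruct (Hl (snd (sq n) / 2)) as [K HK]; [pose proof (Hpos n); lra|].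
    pose proof (HK (max n K) ltac:(lia)). pose proof (Hle n (max n K) ltac:(lia)).
    pose proof (dist_tri M (fst (sq n)) (fst (sq (max n K))) l). lra. }
  exists l. split.
  - apply Hb0. apply (Hin O).
  - intro n. destruct (HS n) as [_ [_ H3]]. apply H3. apply Hin.
Qed.

Lemma baire_nonmeager (Hc : complete M) (V : M -> Prop) (HV : open_set M V) (x0 : M) (Hx0 : V x0) :
  ~ meager M V.
Proof.
  intros [N [HN Hcov]]. destruct (baire Hc V HV x0 Hx0 N HN) as [x [Vx Hx]].
  destruct (Hcov x Vx) as [n Hn]. exact (Hx n Hn).
Qed.

Lemma compact_complete : compact M -> complete M.
Proof.
  intros Hk u Hu. apply NNPP. intro Hn.
  set (W := fun (N : nat) x => exists e, 0 < e /\ forall m, (N <= m)%nat -> e <= dist M (u m) x).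
  assert (Wopen : forall N, open_set M (W N)).
  { intros N x [e [He Hb]]. exists (e/2). split; [lra|]. intros y Hy. exists (e/2). split; [lra|].
    intros m Hm. pose proof (Hb m Hm). pose proof (dist_tri M (u m) y x).
    rewrite (dist_sym M y x) in H0. lra. }
  assert (Wcov : forall x, exists N, W N x).
  { intro x. assert (~ converges_to M u x) by (intro; apply Hn; eauto).
    apply not_all_ex_not in H. destruct H as [e He]. apply imply_to_and in He.
    destruct He as [He Hnc]. destruct (Hu (e/2)) as [N0 HN0]; [lra|].
    assert (exists n, (N0 <= n)%nat /\ e <= dist M (u n) x).
    { apply NNPP. intro Hq. apply Hnc. exists N0. intros n Hn0. apply Rnot_le_lt. intro. apply Hq. eauto. }
    destruct H as [n [Hn1 Hn2]]. exists N0. exists (e/2). split; [lra|]. intros m Hm.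
    pose proof (HN0 m n Hm Hn1). pose proof (dist_tri M (u n) (u m) x). rewrite dist_sym in H. lra. }
  destruct (Hk nat W Wopen Wcov) as [l Hl].
  set (N := list_max l). destruct (Hl (u N)) as [i [Hi [e [He Hb]]]].
  assert (i <= N)%nat.
  { unfold N. assert (Forall (fun k => k <= list_max l)%nat l) by (apply list_max_le; lia).
    rewrite Forall_forall in H. auto. }
  pose proof (Hb N H). rewrite dist_refl in H0. lra.
Qed.

Lemma compact_separable : compact M -> inhabited M -> separable M.
Proof.
  intros Hk [k0].
  assert (Hl : forall m : nat, exists l : list M, forall x, exists i, In i l /\ dist M i x < / (INR m + 1)).
  { intro m. apply (Hk M (fun i x => dist M i x < / (INR m + 1))).
    - intros i x Hx. exists (/ (INR m + 1) - dist M i x). split; [lra|].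
      intros y Hy. pose proof (dist_tri M i x y). lra.
    - intro x. exists x. rewrite dist_refl. apply Rinv_0_lt_compat. pose proof (pos_INR m); lra. }
  destruct (my_choice _ Hl) as [L HL].
  exists (fun p => nth (snd (of_nat p)) (L (fst (of_nat p))) k0).
  intros x eps He.
  destruct (archimed (/ eps)) as [Ha _].
  assert (Hz : (0 <= up (/eps))%Z).
  { apply le_IZR. assert (0 < /eps) by (apply Rinv_0_lt_compat; lra). simpl; lra. }
  set (m := Z.to_nat (up (/ eps))).
  assert (Hm : / eps < INR m + 1). { unfold m. rewrite INR_IZR_INZ, Znat.Z2Nat.id by exact Hz; lra. }
  destruct (HL m x) as [y [Hy Hd]].
  destruct (In_nth _ _ k0 Hy) as [j [_ Hj]].
  exists (to_nat (m, j)). rewrite cancel_of_to. simpl. rewrite Hj, dist_sym.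
  apply Rlt_trans with (1 := Hd).
  rewrite <- (Rinv_inv eps). apply Rinv_lt_contravar; [|lra].
  apply Rmult_lt_0_compat; [apply Rinv_0_lt_compat; lra|]. pose proof (pos_INR m); lra.
Qed.
End Baire.

Lemma closure_cont (M N : MetricSpace) (phi : M -> N) (P : N -> Prop) x :
  continuous M N phi -> closure M (fun y => P (phi y)) x -> closure N P (phi x).
Proof.
  intros Hc Hx e He. destruct (Hc x e He) as [d [Hd Hb]].
  destruct (Hx d Hd) as [y [Py Hy]]. exists (phi y). split; auto.
Qed.

Lemma open_preimage (M N : MetricSpace) (phi : M -> N) (U : N -> Prop) :
  continuous M N phi -> open_set N U -> open_set M (fun x => U (phi x)).
Proof.
  intros Hc HU x Hx. destruct (HU _ Hx) as [e [He Hb]].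
  destruct (Hc x e He) as [d [Hd Hb2]]. exists d. split; auto.
Qed.

Lemma nd_preimage_homeo (M : MetricSpace) (phi psi : M -> M) (N : M -> Prop) :
  continuous M M phi -> continuous M M psi -> (forall y, phi (psi y) = y) ->
  (forall x, psi (phi x) = x) -> nowhere_dense M N -> nowhere_dense M (fun x => N (phi x)).
Proof.
  intros Hphi Hpsi H1 H2 HN x [e [He Hb]]. apply (HN (phi x)).
  destruct (Hpsi (phi x) e He) as [d [Hd Hb2]]. exists d. split; auto.
  intros y Hy. specialize (Hb2 y Hy). rewrite H2 in Hb2.
  rewrite <- (H1 y). apply closure_cont; auto.
Qed.

Section Grp.
Variable G : PolishGroup.
Notation "x * y" := (pg_mul G x y).
Notation "x ^-1" := (pg_inv G x) (at level 3).
Notation one := (pg_one G).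

Lemma mulrV (x : G) : x * x^-1 = one.
Proof.
  set (y := x^-1).
  rewrite <- (pg_mul1 G (x * y)). rewrite <- (pg_mulV G y) at 1.
  rewrite <- (pg_assoc G). rewrite (pg_assoc G y x y).
  unfold y at 2. rewrite (pg_mulV G x), (pg_mul1 G). apply pg_mulV.
Qed.

Lemma mulr1 (x : G) : x * one = x.
Proof. rewrite <- (pg_mulV G x), (pg_assoc G), mulrV. apply pg_mul1. Qed.

Lemma cont_rmul (a : G) : continuous G G (fun x => x * a).
Proof.
  intros x e He. destruct (pg_mul_cont G x a e He) as [d [Hd Hb]].
  exists d. split; auto. intros y Hy. apply Hb; auto. rewrite dist_refl; lra.
Qed.

Lemma cont_lmul_comp (K : MetricSpace) (c : G) (f : K -> G) :
  continuous K G f -> continuous K G (fun k => c * f k).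
Proof.
  intros Hf k e He. destruct (pg_mul_cont G c (f k) e He) as [d [Hd Hb]].
  destruct (Hf k d Hd) as [d2 [Hd2 Hb2]]. exists d2. split; auto.
  intros y Hy. apply Hb; auto. rewrite dist_refl; lra.
Qed.
End Grp.

Theorem theorem2p3 (G : PolishGroup) (A : G -> Prop) :
  haar_meager G A -> meager G A.
Proof.
  intros [B [HB [HAB [K [f [Hf Hmeas]]]]]].
  destruct (borel_BP G B HB) as [U [HU [HM1 HM2]]].
  destruct (classic (exists u, U u)) as [[u0 Hu0] | Hno].
  2:{ apply meager_sub with (1 := HM1). intros x Hx. split; auto. intro. apply Hno; eauto. }
  exfalso.
  destruct HM2 as [Nn [HNn Hcov]].
  destruct (cms_nonempty K) as [kst].
  destruct (compact_separable K (cms_compact K) (cms_nonempty K)) as [s Hs].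
  set (E := fun n j c => closure G (Nn n) (pg_mul G c (f (s j)))).
  assert (HE : forall n j, nowhere_dense G (E n j)).
  { intros n j. unfold E.
    apply (nd_preimage_homeo G (fun x => pg_mul G x (f (s j))) (fun x => pg_mul G x (pg_inv G (f (s j))))).
    - apply cont_rmul.
    - apply cont_rmul.
    - intro y. rewrite <- (pg_assoc G), (pg_mulV G). apply mulr1.
    - intro y. rewrite <- (pg_assoc G), mulrV. apply mulr1.
    - apply nd_closure. auto. }
  set (O := fun c => U (pg_mul G c (f kst))).
  assert (HO : open_set G O).
  { apply (open_preimage G G (fun c => pg_mul G c (f kst))); auto. apply cont_rmul. }
  assert (HOc : O (pg_mul G u0 (pg_inv G (f kst)))).
  { unfold O. rewrite <- (pg_assoc G), (pg_mulV G), mulr1. auto. }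
  destruct (baire G (pg_complete G) O HO _ HOc (fun p => E (fst (of_nat p)) (snd (of_nat p))) (fun p => HE _ _))
    as [c [Oc Hc]].
  assert (Hc' : forall n j, ~ E n j c).
  { intros n j. specialize (Hc (to_nat (n, j))). rewrite cancel_of_to in Hc. exact Hc. }
  set (phi := fun k => pg_mul G c (f k)).
  assert (Hphi : continuous K G phi) by (apply cont_lmul_comp; auto).
  specialize (Hmeas (pg_inv G c) (pg_one G)).
  assert (HD : forall n, nowhere_dense K (fun k => Nn n (phi k))).
  { intros n x [e [He Hb]]. destruct (Hs x e He) as [j Hj].
    apply (Hc' n j). unfold E. apply (closure_cont K G phi (Nn n) (s j) Hphi).
    apply Hb. exact Hj. }
  apply (baire_nonmeager K (compact_complete K (cms_compact K)) (fun k => U (phi k))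
           (open_preimage K G phi U Hphi HU) kst Oc).
  apply meager_sub with (1 := meager_union2 K _ _ Hmeas
     (meager_countable K (fun n k => Nn n (phi k)) (fun n => nd_meager K _ (HD n)))).
  intros k Hk. destruct (classic (B (phi k))) as [Hb | Hb].
  + left. exists (phi k). split; auto. unfold phi.
    rewrite mulr1, (pg_assoc G), (pg_mulV G), (pg_mul1 G). reflexivity.
  + right. apply Hcov. split; auto.
Qed.
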